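(* Let $\rho\in\mathrm{Rect}^\ast(n)$ with $\rho\notin\mathcal B_n$ (a genuine rear ear), and let $\sigma\in\mathrm{Rect}^\ast(n)$ with $d_{\mathrm{sup}}(\rho,\sigma)<\infty$. Then every support corridor between $\rho$ and $\sigma$ starts (at its end in $A(\rho)$) at a vertex whose local simplex dimension in $G_n$ is at least $3$.
   Context: The partition graph $G_n$ has as vertices the integer partitions of $n$; two partitions are adjacent if one is obtained from the other by a single elementary unit transfer followed by reordering: decrease one part by $1$ and either increase a different part by $1$ or create a new part equal to $1$, then delete a part that became $0$ and sort in nonincreasing order (the result being different from the original). $\mathrm{Rect}^\ast(n)=\{(a^b):ab=n,\ a,b\ge2\}$, where $(a^b)$ has $b$ parts equal to $a$. The boundary framework is $\mathcal B_n=\mathcal M_n\cup\mathcal L_n\cup\mathcal R_n$ with $\mathcal M_n=\{(n-k,1^k):0\le k\le n-1\}$, $\mathcal L_n=\{(n-k,k):1\le k\le\lfloor n/2\rfloor\}$, and $\mathcal R_n$ the set of conjugates of elements of $\mathcal L_n$. For $\rho=(a^b)\in\mathrm{Rect}^\ast(n)$ the attachment pair is $A(\rho)=\{(a+1,a^{\,b-2},a-1),\ (a^{\,b-1},a-1,1)\}$ (with $(a+1,a-1)$ as the first element when $b=2$). The support distance $d_{\mathrm{sup}}(\rho,\sigma)$ is the minimum of the graph distances in $G_n\setminus\mathrm{Rect}^\ast(n)$ between a vertex of $A(\rho)$ and a vertex of $A(\sigma)$ ($\infty$ if no such path exists). A support corridor between $\rho$ and $\sigma$ is a shortest path in $G_n\setminus\mathrm{Rect}^\ast(n)$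 joining some vertex of $A(\rho)$ to some vertex of $A(\sigma)$ (of length $d_{\mathrm{sup}}(\rho,\sigma)$). The local simplex dimension of a vertex $v$ is $m-1$ where $m$ is the largest size of a clique of $G_n$ containing $v$. *)

(* Defs.v *)
(* Integer partitions are represented as seq nat in
   nonincreasing order with positive parts. *)
From mathcomp Require Import all_boot.
Set Implicit Arguments. Unset Strict Implicit. Unset Printing Implicit Defensive.

Definition is_partition (n : nat) (p : seq nat) : bool :=
  [&& sorted geq p, all (fun x => 0 < x) p & sumn p == n].

Definition normalize (s : seq nat) : seq nat := sort geq (filter (fun x => 0 < x) s).

(* elementary unit transfer: decrease part i by 1, then increase the part at
   position j by 1 (j = size p creates a new part equal to 1), then normalize *)
Definition transfer (p : seq nat) (i j : nat) : seq nat :=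
  normalize (incr_nth (set_nth 0 p i (nth 0 p i).-1) j).

Definition step (n : nat) (p q : seq nat) : bool :=
  is_partition n p && (q != p) &&
  has (fun i => has (fun j => (i != j) && (q == transfer p i j))
                    (iota 0 (size p).+1))
      (iota 0 (size p)).

Definition adj (n : nat) (p q : seq nat) : bool := step n p q || step n q p.

Definition isRect (n : nat) (p : seq nat) : bool :=
  has (fun a => has (fun b => [&& 1 < a, 1 < b, a * b == n & p == nseq b a])
                    (iota 0 n.+1))
      (iota 0 n.+1).

Definition conjp (p : seq nat) : seq nat :=
  mkseq (fun i => count (fun x => i < x) p) (head 0 p).

Definition inM (n : nat) (p : seq nat) : Prop :=
  exists k, k <= n - 1 /\ p = (n - k) :: nseq k 1.
Definition inL (n : nat) (p : seq nat) : Prop :=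
  exists k, 1 <= k <= n./2 /\ p = [:: n - k; k].
Definition inR (n : nat) (p : seq nat) : Prop :=
  exists q, inL n q /\ p = conjp q.
Definition inB (n : nat) (p : seq nat) : Prop := inM n p \/ inL n p \/ inR n p.

Definition attach (rho : seq nat) : seq (seq nat) :=
  let a := head 0 rho in let b := size rho in
  [:: (a.+1 :: nseq (b - 2) a) ++ [:: a.-1];
      nseq (b - 1) a ++ [:: a.-1; 1]].

Definition walk_avoid (n : nat) (x : seq nat) (s : seq (seq nat)) : bool :=
  [&& is_partition n x, path (adj n) x s & all (fun v => ~~ isRect n v) (x :: s)].

(* x :: s is a walk in G_n \ Rect*(n) from a vertex of A(rho) to a vertex of A(sigma);
   its length is size s *)
Definition conn (n : nat) (rho sigma : seq nat) (x : seq nat) (s : seq (seq nat)) : bool :=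
  [&& x \in attach rho, last x s \in attach sigma & walk_avoid n x s].

Definition dsup_finite (n : nat) (rho sigma : seq nat) : Prop :=
  exists x s, conn n rho sigma x s.

Definition support_corridor (n : nat) (rho sigma : seq nat) (x : seq nat)
    (s : seq (seq nat)) : Prop :=
  conn n rho sigma x s /\ forall x' s', conn n rho sigma x' s' -> size s <= size s'.

Definition is_clique (n : nat) (K : seq (seq nat)) : Prop :=
  uniq K /\ (forall p, p \in K -> is_partition n p) /\
  (forall p q, p \in K -> q \in K -> p != q -> adj n p q).

(* the local simplex dimension of v (= max clique size containing v, minus 1)
   is at least d *)
Definition local_simplex_dim_ge (n : nat) (v : seq nat) (d : nat) : Prop :=
  exists K, is_clique n K /\ v \in K /\ d <= (size K).-1.

(* Main.v *)
Require Import Defs.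
From mathcomp Require Import all_boot zify.
Set Implicit Arguments. Unset Strict Implicit. Unset Printing Implicit Defensive.

Lemma geq_tr : transitive geq.
Proof. move=> x y z /= h1 h2; exact: leq_trans h2 h1. Qed.

Lemma sumn_incr mu i : sumn (incr_nth mu i) = (sumn mu).+1.
Proof. elim: mu i => [|x mu IH] i; first by case: i => [|i] //=; rewrite add0n -cat_nseq sumn_cat sumn_nseq.
by case: i => //= i; rewrite IH addnS. Qed.

Lemma all_pos_incr mu i : all (fun x => 0 < x) mu -> i <= size mu ->
  all (fun x => 0 < x) (incr_nth mu i).
Proof. elim: mu i => [|x mu IH] [|i] //=; first by case/andP.
by move=> /andP[-> H] Hi; rewrite IH. Qed.

Lemma set_incr mu i : i <= size mu ->
  set_nth 0 (incr_nth mu i) i (nth 0 mu i) = if i < size mu then mu else rcons mu 0.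
Proof. elim: mu i => [|x mu IH] [|i] //=.
by move=> Hi; rewrite IH // ltnS; case: ifP. Qed.

Lemma incr_rcons0 mu j : j < size mu -> incr_nth (rcons mu 0) j = rcons (incr_nth mu j) 0.
Proof. elim: mu j => [|x mu IH] [|j] //= Hj. by rewrite IH. Qed.

Lemma step_incr n mu i j : all (fun x => 0 < x) mu -> sumn mu + 1 = n ->
  i <= size mu -> j <= size mu -> i != j ->
  sorted geq (incr_nth mu i) -> sorted geq (incr_nth mu j) ->
  step n (incr_nth mu i) (incr_nth mu j).
Proof.
move=> Hpos Hsum Hi Hj Hij Hsi Hsj.
have Hq : all (fun x => 0 < x) (incr_nth mu j) by exact: all_pos_incr.
rewrite /step /is_partition Hsi all_pos_incr //= sumn_incr -Hsum addn1 eqxx /=.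
apply/andP; split.
  apply/eqP => /(congr1 (fun s => nth 0 s i)); rewrite !nth_incr_nth eqxx eq_sym (negbTE Hij).
  lia.
have Hsz : size mu <= size (incr_nth mu i) by rewrite size_incr_nth; case: ifP => //; lia.
have Hsz2 : i < size (incr_nth mu i) by rewrite size_incr_nth; case: ifP => //; lia.
have H2 : has (fun j0 => (i != j0) && (incr_nth mu j == transfer (incr_nth mu i) i j0))
   (iota 0 (size (incr_nth mu i)).+1).
  apply/hasP; exists j; first by rewrite mem_iota; lia.
  rewrite Hij /= /transfer.
  have -> : (nth 0 (incr_nth mu i) i).-1 = nth 0 mu i by rewrite nth_incr_nth eqxx.
  rewrite set_incr //; case: ifP => Hlt.
    by rewrite /normalize (all_filterP Hq) (sorted_sort geq_tr Hsj).
  have Hjl : j < size mu by lia.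
  by rewrite incr_rcons0 // /normalize filter_rcons /= (all_filterP Hq) (sorted_sort geq_tr Hsj).
by apply/hasP; exists i => //; rewrite mem_iota.
Qed.

Lemma clique_of n mu js : all (fun x => 0 < x) mu -> sumn mu + 1 = n -> uniq js ->
  (forall j, j \in js -> j <= size mu /\ sorted geq (incr_nth mu j)) ->
  is_clique n (map (incr_nth mu) js).
Proof.
move=> Hpos Hsum Hu H; split; first by rewrite (map_inj_uniq (@incr_nth_inj mu)).
split.
  move=> p /mapP[j /H [Hj Hs] ->]; rewrite /is_partition Hs all_pos_incr //=.
  by rewrite sumn_incr -Hsum addn1.
move=> p q /mapP[i /H [Hi Hsi] ->] /mapP[j /H [Hj Hsj] ->] Hne.
apply/orP; left; apply: step_incr => //.
by apply: contraNneq Hne => ->.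
Qed.

Lemma path_nseq x y d t : y <= x -> path geq y t -> path geq x (nseq d y ++ t).
Proof.
elim: d x => [|d IH] x Hyx /= Ht; last by rewrite Hyx IH.
by case: t Ht => //= z t /andP[Hz ->]; rewrite (leq_trans Hz Hyx).
Qed.

Lemma incr_nth_cat s t k : incr_nth (s ++ t) (size s + k) = s ++ incr_nth t k.
Proof. by elim: s => //= x s ->. Qed.

Lemma nseq_cons_cat n (x : nat) t : nseq n x ++ x :: t = nseq n.+1 x ++ t.
Proof. by elim: n => //= n ->. Qed.

Ltac ss := repeat (first [ done | apply/andP; split | progress (rewrite /=) | apply: path_nseq | lia ]).

Theorem corollary4p8 (n : nat) (rho sigma : seq nat) :
  isRect n rho -> ~ inB n rho ->
  isRect n sigma -> dsup_finite n rho sigma ->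
  forall (x : seq nat) (s : seq (seq nat)),
    support_corridor n rho sigma x s -> local_simplex_dim_ge n x 3.
Proof.
move=> /hasP[a _ /hasP[b _ /and4P[Ha Hb /eqP Hn /eqP Hrho]]] HB _ _ x s [/and3P[Hx _ _] _].
have Ha2 : a != 2.
  apply/eqP => Ea; subst a; apply: HB; right; right.
  exists [:: b; b]; split.
    exists b; split; first by apply/andP; split; lia.
    by congr (_ :: _ :: _); lia.
  subst rho; apply: (eq_from_nth (x0:=0)); first by rewrite size_nseq /conjp size_mkseq.
  move=> i; rewrite size_nseq => Hi; rewrite nth_nseq Hi /conjp nth_mkseq //=.
  by rewrite Hi.
have Hb2 : b != 2.
  apply/eqP => Eb; subst b; apply: HB; right; left.
  exists a; split; first by apply/andP; split; lia.
  by rewrite Hrho; congr (_ :: _ :: _); lia.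
have [c Ec] : exists c, a = c.+3 by exists (a - 3); lia.
have [d Ed] : exists d, b = d.+3 by exists (b - 3); lia.
subst a b rho.
move: Hx; rewrite /attach /=; rewrite size_nseq !inE => /orP[] /eqP ->.
- set mu := (c.+4 :: nseq d.+1 c.+3) ++ [:: c.+1].
  have E2 : incr_nth mu d.+2 = (c.+4 :: nseq d.+1 c.+3) ++ [:: c.+2].
    by have := incr_nth_cat (c.+4 :: nseq d.+1 c.+3) [:: c.+1] 0; rewrite /= size_nseq addn0.
  have E3 : incr_nth mu d.+3 = (c.+4 :: nseq d.+1 c.+3) ++ [:: c.+1; 1].
    by have := incr_nth_cat (c.+4 :: nseq d.+1 c.+3) [:: c.+1] 1; rewrite /= size_nseq addn1.
  exists (map (incr_nth mu) [:: 0; 1; d.+2; d.+3]); split; last split; last by [].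
  + apply: clique_of.
    * by rewrite /mu all_cat /= all_nseq orbT.
    * rewrite /mu sumn_cat /= sumn_nseq; nia.
    * rewrite /= !inE; lia.
    * move=> j; rewrite !inE => /or4P[] /eqP ->; (split; first by rewrite /mu size_cat /= size_nseq; lia).
      - by rewrite /mu /=; ss.
      - by rewrite /mu /=; ss.
      - by rewrite E2 /=; ss.
      - by rewrite E3 /=; ss.
  + apply/mapP; exists d.+2; first by rewrite !inE eqxx !orbT.
    by rewrite E2.
- set mu := nseq d.+1 c.+3 ++ [:: c.+2; c.+2; 1].
  have E1 : incr_nth mu d.+1 = nseq d.+2 c.+3 ++ [:: c.+2; 1].
    by have := incr_nth_cat (nseq d.+1 c.+3) [:: c.+2; c.+2; 1] 0; rewrite /= size_nseq addn0 => ->; rewrite nseq_cons_cat.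
  have E3 : incr_nth mu d.+3 = nseq d.+1 c.+3 ++ [:: c.+2; c.+2; 2].
    by have := incr_nth_cat (nseq d.+1 c.+3) [:: c.+2; c.+2; 1] 2; rewrite /= size_nseq addn2.
  have E4 : incr_nth mu d.+4 = nseq d.+1 c.+3 ++ [:: c.+2; c.+2; 1; 1].
    by have := incr_nth_cat (nseq d.+1 c.+3) [:: c.+2; c.+2; 1] 3; rewrite /= size_nseq addn3.
  exists (map (incr_nth mu) [:: 0; d.+1; d.+3; d.+4]); split; last split; last by [].
  + apply: clique_of.
    * by rewrite /mu all_cat /= all_nseq orbT.
    * rewrite /mu sumn_cat /= sumn_nseq; nia.
    * rewrite /= !inE; lia.
    * move=> j; rewrite !inE => /or4P[] /eqP ->; (split; first by rewrite /mu size_cat /= size_nseq; lia).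
      - by rewrite /mu /=; ss.
      - by rewrite E1 /=; ss.
      - by rewrite E3 /=; ss.
      - by rewrite E4 /=; ss.
  + apply/mapP; exists d.+1; first by rewrite !inE eqxx !orbT.
    by rewrite E1.
Qed.
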